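(* Let $I=(c,d)$ and $J$ be open intervals of $\mathbb{R}$ with $c\in\mathbb{R}$, let $O=I\times J$, and let $L:O\to\mathbb{R}$, $(x,y)\mapsto L(x,y)$, be of class $C^1$. Let $a<b$ and $\alpha,\beta\in\mathbb{R}$. Let $X$ be the set of all $\gamma\in C([a,b])$ which are continuously differentiable on $(a,b]$, satisfy $(\gamma(t),\gamma'(t))\in O$ for all $t\in(a,b]$, $\gamma(a)=\alpha$, $\gamma(b)=\beta$, and for which the (possibly improper at $a$) integral $$\mathcal{L}(\gamma)=\int_a^b L(\gamma(t),\gamma'(t))\,dt$$ is defined. If $\gamma\in X$ is an extremum (a minimum or a maximum) of $\mathcal{L}$ on $X$, then $\gamma$ satisfies the Euler–Lagrange equation on $(a,b]$, i.e. for all $t\in(a,b]$, $$\frac{\partial L}{\partial x}(\gamma(t),\gamma'(t))=\frac{d}{dt}\,\frac{\partial L}{\partial y}(\gamma(t),\gamma'(t)).$$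
   Context: Here $C([a,b])$ denotes the space of real-valued continuous functions on $[a,b]$. The Euler–Lagrange equation includes the assertion that $t\mapsto \frac{\partial L}{\partial y}(\gamma(t),\gamma'(t))$ is differentiable on $(a,b]$ (one-sided at $b$). *)

(* Defs.v *)
From Stdlib Require Import Reals.
From Coquelicot Require Import Coquelicot.
Open Scope R_scope.

(* O = I x J with I = (c,d), J = (j1,j2); endpoints in Rbar (possibly infinite). *)
Definition inO (c : R) (d j1 j2 : Rbar) (x y : R) : Prop :=
  (c < x /\ Rbar_lt x d) /\ (Rbar_lt j1 y /\ Rbar_lt y j2).

Definition pdx (L : R -> R -> R) (p : R * R) : R := Derive (fun u => L u (snd p)) (fst p).
Definition pdy (L : R -> R -> R) (p : R * R) : R := Derive (fun v => L (fst p) v) (snd p).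

Definition C1_on (O : R -> R -> Prop) (L : R -> R -> R) : Prop :=
  forall x y, O x y ->
    ex_derive (fun u => L u y) x /\ ex_derive (fun v => L x v) y /\
    continuous (fun p : R * R => L (fst p) (snd p)) (x, y) /\
    continuous (pdx L) (x, y) /\ continuous (pdy L) (x, y).

Definition cont_on_ab (g : R -> R) (a b : R) : Prop :=
  forall t, a <= t <= b ->
    filterlim g (within (fun s => a <= s <= b) (locally t)) (locally (g t)).

Definition deriv_on_aB (g g' : R -> R) (a b : R) : Prop :=
  (forall t, a < t < b -> is_derive g t (g' t)) /\
  filterlim (fun s => (g s - g b) / (s - b)) (at_left b) (locally (g' b)).

Definition cont_on_aB (h : R -> R) (a b : R) : Prop :=
  (forall t, a < t < b -> continuous h t) /\
  filterlim h (at_left b) (locally (h b)).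

Definition lag_integrand (L : R -> R -> R) (g g' : R -> R) (t : R) : R := L (g t) (g' t).

(* (g, g') describes an element g of X, g' being its derivative on (a,b]
   (which is uniquely determined on (a,b] by g). *)
Definition inX (c : R) (d j1 j2 : Rbar) (L : R -> R -> R) (a b alpha beta : R)
  (g g' : R -> R) : Prop :=
  cont_on_ab g a b /\
  deriv_on_aB g g' a b /\ cont_on_aB g' a b /\
  (forall t, a < t <= b -> inO c d j1 j2 (g t) (g' t)) /\
  g a = alpha /\ g b = beta /\
  ex_RInt_gen (lag_integrand L g g') (at_right a) (at_point b).

Definition lag_value (L : R -> R -> R) (a b : R) (g g' : R -> R) : R :=
  RInt_gen (lag_integrand L g g') (at_right a) (at_point b).

(* Main.v *)
Require Import Defs.
From Stdlib Require Import Reals Lra.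
From Coquelicot Require Import Coquelicot.
Open Scope R_scope.


Lemma ballR (x y : R) (e : R) : ball x e y <-> Rabs (y - x) < e.
Proof. unfold ball; simpl; unfold AbsRing_ball, abs, minus, plus, opp; simpl. tauto. Qed.

Lemma locR (x : R) (P : R -> Prop) :
  locally x P <-> exists d : posreal, forall y, Rabs (y - x) < d -> P y.
Proof.
  split; intros [d Hd]; exists d; intros y Hy; apply Hd; now apply ballR.
Qed.

Lemma contR (f : R -> R) (x : R) :
  continuous f x <-> forall e : posreal, exists d : posreal, forall y, Rabs (y - x) < d -> Rabs (f y - f x) < e.
Proof.
  split.
  - intros H e. assert (H1 := proj1 (filterlim_locally f (f x)) H e).
    apply locR in H1. destruct H1 as [d Hd]. exists d. intros y Hy. apply ballR. now apply Hd.
  - intros H. apply filterlim_locally. intros e. apply locR. destruct (H e) as [d Hd].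
    exists d. intros y Hy. apply ballR. now apply Hd.
Qed.

Lemma cont2R (f : R * R -> R) (x y : R) :
  continuous f (x, y) -> forall e : posreal, exists d : posreal, forall u v,
    Rabs (u - x) < d -> Rabs (v - y) < d -> Rabs (f (u, v) - f (x, y)) < e.
Proof.
  intros H e.
  assert (H2 : continuity_2d_pt (fun u v => f (u, v)) x y).
  { apply continuity_2d_pt_filterlim.
    eapply filterlim_ext; [|exact H]. intros [a b]; reflexivity. }
  destruct (H2 e) as [d Hd]. exists d. intros u v Hu Hv. now apply Hd.
Qed.

Lemma mvt_bound (f : R -> R) (x u : R) (l e : R) :
  (forall w, Rmin x u <= w <= Rmax x u -> ex_derive f w) ->
  (forall w, Rmin x u <= w <= Rmax x u -> Rabs (Derive f w - l) <= e) ->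
  Rabs (f u - f x - l * (u - x)) <= e * Rabs (u - x).
Proof.
  intros Hd Hb.
  destruct (MVT_gen f x u (Derive f)) as [c [Hc Heq]].
  - intros w Hw. apply Derive_correct, Hd. lra.
  - intros w Hw. apply continuity_pt_filterlim. exact (ex_derive_continuous (K:=R_AbsRing) (V:=R_NormedModule) f w (Hd w ltac:(lra))).
  - rewrite Heq. replace (Derive f c * (u - x) - l * (u - x)) with ((Derive f c - l) * (u - x)) by ring.
    rewrite Rabs_mult. apply Rmult_le_compat_r. apply Rabs_pos. apply Hb. exact Hc.
Qed.

Lemma C1_diff (L : R -> R -> R) (x y : R) (d0 : posreal) :
  (forall u v, Rabs (u - x) < d0 -> Rabs (v - y) < d0 ->
     ex_derive (fun w => L w v) u /\ ex_derive (fun z => L u z) v) ->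
  continuous (pdx L) (x, y) -> continuous (pdy L) (x, y) ->
  differentiable_pt_lim L x y (pdx L (x, y)) (pdy L (x, y)).
Proof.
  intros Hex Cx Cy e.
  assert (he2 : 0 < e / 2) by (destruct e; simpl; lra).
  destruct (cont2R _ _ _ Cx (mkposreal _ he2)) as [d1 H1].
  destruct (cont2R _ _ _ Cy (mkposreal _ he2)) as [d2 H2].
  simpl in H1, H2.
  assert (hd : 0 < Rmin d0 (Rmin d1 d2)).
  { destruct d0, d1, d2; simpl. repeat apply Rmin_pos; lra. }
  exists (mkposreal _ hd). simpl. intros u v Hu Hv.
  assert (Hu0 : Rabs (u - x) < d0) by (eapply Rlt_le_trans; [exact Hu| apply Rmin_l]).
  assert (Hv0 : Rabs (v - y) < d0) by (eapply Rlt_le_trans; [exact Hv| apply Rmin_l]).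
  assert (Hu1 : Rabs (u - x) < d1) by (eapply Rlt_le_trans; [exact Hu| eapply Rle_trans; [apply Rmin_r| apply Rmin_l]]).
  assert (Hv1 : Rabs (v - y) < d1) by (eapply Rlt_le_trans; [exact Hv| eapply Rle_trans; [apply Rmin_r| apply Rmin_l]]).
  assert (Hu2 : Rabs (u - x) < d2) by (eapply Rlt_le_trans; [exact Hu| eapply Rle_trans; [apply Rmin_r| apply Rmin_r]]).
  assert (Hv2 : Rabs (v - y) < d2) by (eapply Rlt_le_trans; [exact Hv| eapply Rle_trans; [apply Rmin_r| apply Rmin_r]]).
  assert (Hrng : forall a b w, Rabs (b - a) < d0 -> Rmin a b <= w <= Rmax a b -> Rabs (w - a) <= Rabs (b - a)).
  { intros a b w _ Hw. unfold Rmin, Rmax in Hw. destruct (Rle_dec a b); unfold Rabs;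
    repeat destruct Rcase_abs; lra. }
  assert (P1 : Rabs (L u v - L x v - pdx L (x, y) * (u - x)) <= e / 2 * Rabs (u - x)).
  { apply (mvt_bound (fun w => L w v) x u).
    - intros w Hw. apply (Hex w v); [|exact Hv0]. eapply Rle_lt_trans; [apply (Hrng x u w)|]; auto.
    - intros w Hw. apply Rlt_le.
      assert (Hw' : Rabs (w - x) <= Rabs (u - x)) by (apply (Hrng x u w); auto).
      specialize (H1 w v ltac:(lra) Hv1). exact H1. }
  assert (P2 : Rabs (L x v - L x y - pdy L (x, y) * (v - y)) <= e / 2 * Rabs (v - y)).
  { apply (mvt_bound (fun w => L x w) y v).
    - intros w Hw. apply (Hex x w); [rewrite Rminus_eq_0, Rabs_R0; apply cond_pos|].
      eapply Rle_lt_trans; [apply (Hrng y v w)|]; auto.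
    - intros w Hw. apply Rlt_le.
      assert (Hw' : Rabs (w - y) <= Rabs (v - y)) by (apply (Hrng y v w); auto).
      assert (Hx0 : Rabs (x - x) < d2) by (rewrite Rminus_eq_0, Rabs_R0; apply cond_pos).
      specialize (H2 x w Hx0 ltac:(lra)). exact H2. }
  replace (L u v - L x y - (pdx L (x, y) * (u - x) + pdy L (x, y) * (v - y)))
    with ((L u v - L x v - pdx L (x, y) * (u - x)) + (L x v - L x y - pdy L (x, y) * (v - y))) by ring.
  eapply Rle_trans; [apply Rabs_triang|].
  assert (Rabs (u - x) <= Rmax (Rabs (u - x)) (Rabs (v - y))) by apply Rmax_l.
  assert (Rabs (v - y) <= Rmax (Rabs (u - x)) (Rabs (v - y))) by apply Rmax_r.
  destruct e as [e he]; simpl in *. nra.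
Qed.

Definition mup (d : Rbar) (x : R) : R := match d with Finite r => r - x | _ => 1 end.
Definition mlo (d : Rbar) (x : R) : R := match d with Finite r => x - r | _ => 1 end.

Lemma mup_pos d (x : R) : Rbar_lt x d -> 0 < mup d x.
Proof. destruct d; simpl; intros; lra. Qed.
Lemma mlo_pos d (x : R) : Rbar_lt d x -> 0 < mlo d x.
Proof. destruct d; simpl; intros; lra. Qed.
Lemma mup_ok d (x u : R) : Rbar_lt x d -> Rabs (u - x) < mup d x -> Rbar_lt u d.
Proof. destruct d; simpl; intros H1 H2; auto. unfold Rabs in H2; destruct Rcase_abs; lra. Qed.
Lemma mlo_ok d (x u : R) : Rbar_lt d x -> Rabs (u - x) < mlo d x -> Rbar_lt d u.
Proof. destruct d; simpl; intros H1 H2; auto. unfold Rabs in H2; destruct Rcase_abs; lra. Qed.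
Lemma mup_cont d (f : R -> R) t : continuous f t -> continuous (fun s => mup d (f s)) t.
Proof.
  intros H. destruct d; simpl; try apply continuous_const.
  apply (continuous_minus (fun _ => r) f); [apply continuous_const | exact H].
Qed.
Lemma mlo_cont d (f : R -> R) t : continuous f t -> continuous (fun s => mlo d (f s)) t.
Proof.
  intros H. destruct d; simpl; try apply continuous_const.
  apply (continuous_minus f (fun _ => r)); [exact H | apply continuous_const].
Qed.

Definition marg (c : R) (d j1 j2 : Rbar) (x y : R) : R :=
  Rmin (Rmin (mlo (Finite c) x) (mup d x)) (Rmin (mlo j1 y) (mup j2 y)).

Lemma marg_pos c d j1 j2 x y : inO c d j1 j2 x y -> 0 < marg c d j1 j2 x y.
Proof.
  intros [[H1 H2] [H3 H4]]. unfold marg.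
  repeat apply Rmin_pos.
  apply (mlo_pos (Finite c)); exact H1. apply mup_pos; auto. apply mlo_pos; auto. apply mup_pos; auto.
Qed.

Lemma marg_ok c d j1 j2 x y u v : inO c d j1 j2 x y ->
  Rabs (u - x) < marg c d j1 j2 x y -> Rabs (v - y) < marg c d j1 j2 x y -> inO c d j1 j2 u v.
Proof.
  intros [[H1 H2] [H3 H4]] Hu Hv. unfold marg in *.
  assert (A1 := Rmin_l (Rmin (mlo (Finite c) x) (mup d x)) (Rmin (mlo j1 y) (mup j2 y))).
  assert (A2 := Rmin_r (Rmin (mlo (Finite c) x) (mup d x)) (Rmin (mlo j1 y) (mup j2 y))).
  assert (B1 := Rmin_l (mlo (Finite c) x) (mup d x)).
  assert (B2 := Rmin_r (mlo (Finite c) x) (mup d x)).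
  assert (B3 := Rmin_l (mlo j1 y) (mup j2 y)).
  assert (B4 := Rmin_r (mlo j1 y) (mup j2 y)).
  split; split.
  - apply (mlo_ok (Finite c) x u H1); lra.
  - apply (mup_ok d x u H2); lra.
  - apply (mlo_ok j1 y v H3); lra.
  - apply (mup_ok j2 y v H4); lra.
Qed.

Lemma diffO c d j1 j2 L x y : C1_on (inO c d j1 j2) L -> inO c d j1 j2 x y ->
  differentiable_pt_lim L x y (pdx L (x, y)) (pdy L (x, y)).
Proof.
  intros HC HO.
  apply (C1_diff L x y (mkposreal _ (marg_pos _ _ _ _ _ _ HO))).
  - intros u v Hu Hv. simpl in Hu, Hv.
    destruct (HC u v (marg_ok _ _ _ _ _ _ _ _ HO Hu Hv)) as [A [B _]]. auto.
  - apply (HC x y HO).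
  - apply (HC x y HO).
Qed.

Lemma posmin (k : R -> R) p q : p <= q -> (forall t, p <= t <= q -> continuous k t) ->
  (forall t, p <= t <= q -> 0 < k t) -> exists m, 0 < m /\ forall t, p <= t <= q -> m <= k t.
Proof.
  intros Hpq Hc Hp.
  destruct (continuity_ab_min k p q Hpq) as [t0 [H1 H2]].
  - intros t Ht. apply continuity_pt_filterlim, Hc, Ht.
  - exists (k t0). split; auto.
Qed.

Lemma bnd (k : R -> R) p q : p <= q -> (forall t, p <= t <= q -> continuous k t) ->
  exists M, 0 <= M /\ forall t, p <= t <= q -> Rabs (k t) <= M.
Proof.
  intros Hpq Hc.
  destruct (continuity_ab_min (fun t => - Rabs (k t)) p q Hpq) as [t0 [H1 H2]].
  - intros t Ht. apply continuity_pt_filterlim.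
    apply (continuous_opp (fun t => Rabs (k t))). apply continuous_Rabs_comp, Hc, Ht.
  - exists (Rabs (k t0)). split. apply Rabs_pos. intros t Ht. specialize (H1 t Ht). lra.
Qed.

Lemma comp2d (F : R * R -> R) (X Y : R -> R -> R) x y :
  continuous F (X x y, Y x y) -> continuity_2d_pt X x y -> continuity_2d_pt Y x y ->
  continuity_2d_pt (fun u v => F (X u v, Y u v)) x y.
Proof.
  intros HF HX HY e.
  destruct (cont2R F _ _ HF e) as [d Hd].
  destruct (HX d) as [d1 H1]. destruct (HY d) as [d2 H2].
  assert (hd : 0 < Rmin d1 d2) by (apply Rmin_pos; apply cond_pos).
  exists (mkposreal _ hd). simpl. intros u v Hu Hv.
  assert (A1 := Rmin_l d1 d2). assert (A2 := Rmin_r d1 d2).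
  apply Hd; [apply H1|apply H2]; lra.
Qed.

Lemma cont_comp2 (F : R * R -> R) (X Y : R -> R) t :
  continuous X t -> continuous Y t -> continuous F (X t, Y t) ->
  continuous (fun s => F (X s, Y s)) t.
Proof.
  intros HX HY HF.
  apply (continuous_comp_2 X Y (fun u v => F (u, v))); auto.
  eapply continuous_ext; [|exact HF]. intros [u v]; reflexivity.
Qed.

Lemma is_RInt_zero_ext (k : R -> R) x y : (forall t, Rmin x y < t < Rmax x y -> k t = 0) -> is_RInt k x y 0.
Proof.
  intros H. eapply is_RInt_ext; [intros t Ht; symmetry; apply H, Ht|].
  assert (H0 := is_RInt_const x y (0:R)). change (scal (y - x) (0:R)) with (Rmult (y - x) 0) in H0. rewrite Rmult_0_r in H0. exact H0.
Qed.

Lemma is_RInt_gen_bump (k : R -> R) a b p q :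
  a < p -> p <= q -> q < b ->
  (forall t, t < p \/ q < t -> k t = 0) -> ex_RInt k p q ->
  is_RInt_gen k (at_right a) (at_point b) (RInt k p q).
Proof.
  intros Hap Hpq Hqb Hk Hex P HP.
  apply (Filter_prod _ _ _ (fun x => a < x < p) (fun y => y = b)).
  - apply locR. assert (h : 0 < p - a) by lra. exists (mkposreal _ h). simpl.
    intros y Hy Hay. unfold Rabs in Hy; destruct Rcase_abs in Hy; lra.
  - reflexivity.
  - intros x y Hx Hy. simpl. subst y. exists (RInt k p q). split.
    + replace (RInt k p q) with (plus (plus 0 (RInt k p q)) 0)
        by (unfold plus; simpl; ring).
      apply (@is_RInt_Chasles R_NormedModule k x q b (plus 0 (RInt k p q)) 0);
        [apply (@is_RInt_Chasles R_NormedModule k x p q 0 (RInt k p q))|].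
      * apply is_RInt_zero_ext. intros t Ht. apply Hk. left.
        rewrite Rmax_right in Ht by lra. lra.
      * exact (RInt_correct (V:=R_CompleteNormedModule) k p q Hex).
      * apply is_RInt_zero_ext. intros t Ht. apply Hk. right.
        rewrite Rmin_left in Ht by lra. lra.
    + apply locally_singleton, HP.
Qed.

Lemma lag_shift (fg fh : R -> R) a b p q l :
  a < p -> p <= q -> q < b ->
  (forall t, t < p \/ q < t -> fh t = fg t) -> ex_RInt fh p q -> ex_RInt fg p q ->
  is_RInt_gen fg (at_right a) (at_point b) l ->
  is_RInt_gen fh (at_right a) (at_point b) (l + (RInt fh p q - RInt fg p q)).
Proof.
  intros Hap Hpq Hqb Heq Hh Hg Hl.
  assert (Hk := is_RInt_gen_bump (fun t => fh t - fg t) a b p q Hap Hpq Hqb).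
  assert (E : RInt (fun t => fh t - fg t) p q = RInt fh p q - RInt fg p q)
    by exact (RInt_minus (V:=R_CompleteNormedModule) fh fg p q Hh Hg).
  rewrite E in Hk.
  assert (Hs := is_RInt_gen_plus fg (fun t => fh t - fg t) _ _ Hl
    (Hk ltac:(intros t Ht; rewrite Heq by exact Ht; ring) (ex_RInt_minus _ _ _ _ Hh Hg))).
  eapply is_RInt_gen_ext; [| exact Hs].
  apply (Filter_prod _ _ _ (fun _ => True) (fun _ => True)); try exact I.
  - apply filter_true.
  - intros x y _ _ t _. unfold plus; simpl. ring.
Qed.

Lemma der_cont (f : R -> R) t l : is_derive f t l -> continuous f t.
Proof. intros H. exact (ex_derive_continuous (K:=R_AbsRing) (V:=R_NormedModule) f t (ex_intro _ l H)). Qed.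

Lemma gcont c d j1 j2 L a b alpha beta g g' : inX c d j1 j2 L a b alpha beta g g' ->
  forall t, a < t < b -> continuous g t.
Proof. intros [_ [[H _] _]] t Ht. eapply der_cont, H, Ht. Qed.

Lemma g'cont c d j1 j2 L a b alpha beta g g' : inX c d j1 j2 L a b alpha beta g g' ->
  forall t, a < t < b -> continuous g' t.
Proof. intros [_ [_ [[H _] _]]] t Ht. apply H, Ht. Qed.

Lemma gO c d j1 j2 L a b alpha beta g g' : inX c d j1 j2 L a b alpha beta g g' ->
  forall t, a < t <= b -> inO c d j1 j2 (g t) (g' t).
Proof. intros [_ [_ [_ [H _]]]]. exact H. Qed.

Lemma C1_L c d j1 j2 L : C1_on (inO c d j1 j2) L ->
  forall x y, inO c d j1 j2 x y -> continuous (fun z : R * R => L (fst z) (snd z)) (x, y).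
Proof. intros H x y HO. apply (H x y HO). Qed.
Lemma C1_x c d j1 j2 L : C1_on (inO c d j1 j2) L ->
  forall x y, inO c d j1 j2 x y -> continuous (pdx L) (x, y).
Proof. intros H x y HO. apply (H x y HO). Qed.
Lemma C1_y c d j1 j2 L : C1_on (inO c d j1 j2) L ->
  forall x y, inO c d j1 j2 x y -> continuous (pdy L) (x, y).
Proof. intros H x y HO. apply (H x y HO). Qed.

Lemma marg_ge c d j1 j2 x y m :
  m <= mlo (Finite c) x -> m <= mup d x -> m <= mlo j1 y -> m <= mup j2 y -> m <= marg c d j1 j2 x y.
Proof. intros. unfold marg. repeat apply Rmin_glb; auto. Qed.

Lemma unif_marg c d j1 j2 (X Y : R -> R) p q : p <= q ->
  (forall t, p <= t <= q -> inO c d j1 j2 (X t) (Y t)) ->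
  (forall t, p <= t <= q -> continuous X t) -> (forall t, p <= t <= q -> continuous Y t) ->
  exists m, 0 < m /\ forall t, p <= t <= q -> m <= marg c d j1 j2 (X t) (Y t).
Proof.
  intros Hpq HO HX HY.
  destruct (posmin (fun t => mlo (Finite c) (X t)) p q Hpq) as [m1 [h1 H1]].
  { intros t Ht. apply mlo_cont, HX, Ht. }
  { intros t Ht. apply (mlo_pos (Finite c)). apply HO, Ht. }
  destruct (posmin (fun t => mup d (X t)) p q Hpq) as [m2 [h2 H2]].
  { intros t Ht. apply mup_cont, HX, Ht. }
  { intros t Ht. apply mup_pos. apply HO, Ht. }
  destruct (posmin (fun t => mlo j1 (Y t)) p q Hpq) as [m3 [h3 H3]].
  { intros t Ht. apply mlo_cont, HY, Ht. }
  { intros t Ht. apply mlo_pos. apply HO, Ht. }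
  destruct (posmin (fun t => mup j2 (Y t)) p q Hpq) as [m4 [h4 H4]].
  { intros t Ht. apply mup_cont, HY, Ht. }
  { intros t Ht. apply mup_pos. apply HO, Ht. }
  exists (Rmin (Rmin m1 m2) (Rmin m3 m4)). split.
  - repeat apply Rmin_pos; auto.
  - intros t Ht.
    assert (A1 := Rmin_l (Rmin m1 m2) (Rmin m3 m4)). assert (A2 := Rmin_r (Rmin m1 m2) (Rmin m3 m4)).
    assert (B1 := Rmin_l m1 m2). assert (B2 := Rmin_r m1 m2).
    assert (B3 := Rmin_l m3 m4). assert (B4 := Rmin_r m3 m4).
    specialize (H1 t Ht); specialize (H2 t Ht); specialize (H3 t Ht); specialize (H4 t Ht).
    apply marg_ge; simpl in *; lra.
Qed.
Lemma flim_pe {T} (F : (T -> Prop) -> Prop) {FF : Filter F} (f k : T -> R) l1 l2 e :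
  filterlim f F (locally l1) -> filterlim k F (locally l2) ->
  filterlim (fun x => f x + e * k x) F (locally (l1 + e * l2)).
Proof.
  intros H1 H2.
  assert (H3 : filterlim (fun x => e * k x) F (locally (e * l2))).
  { eapply filterlim_comp; [exact H2|].
    apply (continuous_mult (fun _ : R => e) (fun y => y) l2); [apply continuous_const|apply continuous_id]. }
  exact (filterlim_comp_2 f (fun x => e * k x) Rplus H1 H3 (filterlim_plus (K:=R_AbsRing) (V:=R_NormedModule) l1 (e * l2))).
Qed.

Lemma variation_inX c d j1 j2 L a b alpha beta g g' p q (eta eta' : R -> R) e :
  C1_on (inO c d j1 j2) L -> a < p -> p < q -> q < b ->
  inX c d j1 j2 L a b alpha beta g g' ->
  (forall t, continuous eta' t) -> (forall t, is_derive eta t (eta' t)) ->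
  (forall t, t < p \/ q < t -> eta t = 0 /\ eta' t = 0) ->
  (forall t, a < t <= b -> inO c d j1 j2 (g t + e * eta t) (g' t + e * eta' t)) ->
  inX c d j1 j2 L a b alpha beta (fun t => g t + e * eta t) (fun t => g' t + e * eta' t) /\
  lag_value L a b (fun t => g t + e * eta t) (fun t => g' t + e * eta' t) =
  lag_value L a b g g' + (RInt (fun t => L (g t + e * eta t) (g' t + e * eta' t)) p q
                           - RInt (fun t => L (g t) (g' t)) p q).
Proof.
  intros HC Hap Hpq Hqb HX He'c Hed Hz HO.
  assert (HX' := HX).
  destruct HX' as [Hg [[Hgd Hgb] [[Hg'c Hg'b] [HgO [Ha [Hb Hint]]]]]].
  assert (Hec : forall t, continuous eta t) by (intros t; eapply der_cont, Hed).
  assert (Hintv : ex_RInt (fun t => L (g t + e * eta t) (g' t + e * eta' t)) p q /\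
                  ex_RInt (fun t => L (g t) (g' t)) p q).
  { split; apply (ex_RInt_continuous (V:=R_CompleteNormedModule)); intros t Ht;
      rewrite Rmin_left in Ht by lra; rewrite Rmax_right in Ht by lra.
    - apply (cont_comp2 (fun z => L (fst z) (snd z)) (fun t => g t + e * eta t) (fun t => g' t + e * eta' t)).
      + apply (continuous_plus g (fun t => e * eta t)). apply (gcont _ _ _ _ _ _ _ _ _ _ _ HX); lra.
        apply (continuous_mult (fun _ => e) eta). apply continuous_const. apply Hec.
      + apply (continuous_plus g' (fun t => e * eta' t)). apply (g'cont _ _ _ _ _ _ _ _ _ _ _ HX); lra.
        apply (continuous_mult (fun _ => e) eta'). apply continuous_const. apply He'c.
      + apply (C1_L _ _ _ _ _ HC). apply HO; lra.
    - apply (cont_comp2 (fun z => L (fst z) (snd z)) g g').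
      + apply (gcont _ _ _ _ _ _ _ _ _ _ _ HX); lra.
      + apply (g'cont _ _ _ _ _ _ _ _ _ _ _ HX); lra.
      + apply (C1_L _ _ _ _ _ HC). apply HgO; lra. }
  destruct Hint as [l Hl].
  assert (Hsh := lag_shift (lag_integrand L g g')
            (lag_integrand L (fun t => g t + e * eta t) (fun t => g' t + e * eta' t)) a b p q l
            Hap (Rlt_le _ _ Hpq) Hqb).
  assert (Hsh' : is_RInt_gen (lag_integrand L (fun t => g t + e * eta t) (fun t => g' t + e * eta' t))
           (at_right a) (at_point b)
           (l + (RInt (fun t => L (g t + e * eta t) (g' t + e * eta' t)) p q - RInt (fun t => L (g t) (g' t)) p q))).
  { apply Hsh; try apply Hintv; try exact Hl.
    intros t Ht. unfold lag_integrand. destruct (Hz t Ht) as [-> ->]. f_equal; ring. }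
  assert (Hlv : lag_value L a b g g' = l).
  { unfold lag_value. apply is_RInt_gen_unique; try exact Hl. }
  split.
  - split; [|split; [|split; [|split; [|split; [|split]]]]].
    + intros t Ht. apply flim_pe; [apply within_filter, locally_filter|apply Hg, Ht|].
      apply (filterlim_filter_le_1 (F := locally t) _ (filter_le_within (F:=locally t) _)). apply Hec.
    + split.
      * intros t Ht. apply (is_derive_plus g (fun t => e * eta t)). apply Hgd, Ht.
        apply is_derive_scal, Hed.
      * destruct (Hz b (or_intror Hqb)) as [_ Eb']. rewrite Eb'. replace (g' b + e * 0) with (g' b) by ring.
        eapply filterlim_ext_loc; [|exact Hgb].
        apply locR. assert (h : 0 < b - q) by lra. exists (mkposreal _ h). simpl.
        intros y Hy Hyb. unfold Rabs in Hy; destruct Rcase_abs in Hy; try lra.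
        destruct (Hz y ltac:(right; lra)) as [E1 _]. destruct (Hz b ltac:(right; lra)) as [E2 _].
        rewrite E1, E2. f_equal; ring.
    + split.
      * intros t Ht. apply (continuous_plus g' (fun t => e * eta' t)). apply Hg'c, Ht.
        apply (continuous_mult (fun _ => e) eta'). apply continuous_const. apply He'c.
      * destruct (Hz b (or_intror Hqb)) as [_ Eb']. rewrite Eb'. replace (g' b + e * 0) with (g' b) by ring.
        eapply filterlim_ext_loc; [|exact Hg'b].
        apply locR. assert (h : 0 < b - q) by lra. exists (mkposreal _ h). simpl.
        intros y Hy Hyb. unfold Rabs in Hy; destruct Rcase_abs in Hy; try lra.
        destruct (Hz y ltac:(right; lra)) as [_ E1]. rewrite E1. ring.
    + exact HO.
    + destruct (Hz a ltac:(left; lra)) as [E _]. rewrite E, Ha. ring.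
    + destruct (Hz b ltac:(right; lra)) as [E _]. rewrite E, Hb. ring.
    + eexists; exact Hsh'.
  - unfold lag_value at 1. rewrite Hlv. apply is_RInt_gen_unique. exact Hsh'.
Qed.

Lemma hder c d j1 j2 L g g' (eta eta' : R -> R) u0 t :
  C1_on (inO c d j1 j2) L ->
  inO c d j1 j2 (g t + u0 * eta t) (g' t + u0 * eta' t) ->
  is_derive (fun u => L (g t + u * eta t) (g' t + u * eta' t)) u0
    (pdx L (g t + u0 * eta t, g' t + u0 * eta' t) * eta t +
     pdy L (g t + u0 * eta t, g' t + u0 * eta' t) * eta' t).
Proof.
  intros HC HO. apply is_derive_Reals.
  apply (derivable_pt_lim_comp_2d L (fun u => g t + u * eta t) (fun u => g' t + u * eta' t)).
  - apply (diffO c d j1 j2 L _ _ HC HO).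
  - apply is_derive_Reals. auto_derive; [exact I | ring].
  - apply is_derive_Reals. auto_derive; [exact I | ring].
Qed.

Lemma hcont (g eta : R -> R) e t : continuous g t -> continuous eta t ->
  continuous (fun s => g s + e * eta s) t.
Proof.
  intros H1 H2. apply (continuous_plus g (fun s => e * eta s)); auto.
  apply (continuous_mult (fun _ => e) eta); auto. apply continuous_const.
Qed.

Lemma hcont2 (g eta : R -> R) t : continuity_pt g t -> continuity_pt eta t ->
  continuity_2d_pt (fun u v => g v + u * eta v) 0 t.
Proof.
  intros H1 H2. apply continuity_2d_pt_plus.
  - apply (continuity_1d_2d_pt_comp g (fun u v => v)); [exact H1|apply continuity_2d_pt_id2].
  - apply continuity_2d_pt_mult; [apply continuity_2d_pt_id1|].
    apply (continuity_1d_2d_pt_comp eta (fun u v => v)); [exact H2|apply continuity_2d_pt_id2].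
Qed.

Definition extremum c d j1 j2 L a b alpha beta (g g' : R -> R) : Prop :=
  (forall h h', inX c d j1 j2 L a b alpha beta h h' ->
      lag_value L a b g g' <= lag_value L a b h h') \/
  (forall h h', inX c d j1 j2 L a b alpha beta h h' ->
      lag_value L a b h h' <= lag_value L a b g g').

Lemma variation c d j1 j2 L a b alpha beta g g' p q (eta eta' : R -> R) :
  C1_on (inO c d j1 j2) L -> a < p -> p < q -> q < b ->
  inX c d j1 j2 L a b alpha beta g g' ->
  extremum c d j1 j2 L a b alpha beta g g' ->
  (forall t, continuous eta' t) -> (forall t, is_derive eta t (eta' t)) ->
  (forall t, t < p \/ q < t -> eta t = 0 /\ eta' t = 0) ->
  RInt (fun t => pdx L (g t, g' t) * eta t + pdy L (g t, g' t) * eta' t) p q = 0.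
Proof.
  intros HC Hap Hpq Hqb HX Hext He'c Hed Hz.
  assert (Hec : forall t, continuous eta t) by (intros t; eapply der_cont, Hed).
  assert (Hgc := gcont _ _ _ _ _ _ _ _ _ _ _ HX).
  assert (Hg'c := g'cont _ _ _ _ _ _ _ _ _ _ _ HX).
  assert (HgO := gO _ _ _ _ _ _ _ _ _ _ _ HX).
  destruct (unif_marg c d j1 j2 g g' p q (Rlt_le _ _ Hpq)) as [m [hm Hm]].
  { intros t Ht; apply HgO; lra. } { intros t Ht; apply Hgc; lra. } { intros t Ht; apply Hg'c; lra. }
  destruct (bnd eta p q (Rlt_le _ _ Hpq)) as [M1 [hM1 HM1]]. { intros t _; apply Hec. }
  destruct (bnd eta' p q (Rlt_le _ _ Hpq)) as [M2 [hM2 HM2]]. { intros t _; apply He'c. }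
  set (M := M1 + M2). assert (HMdef : M = M1 + M2) by reflexivity.
  assert (he0 : 0 < m / (M + 1)) by (apply Rdiv_lt_0_compat; unfold M; lra).
  set (e0 := m / (M + 1)) in *.
  assert (He0M : e0 * M < m).
  { unfold e0. apply (Rmult_lt_reg_r (M + 1)); [unfold M; lra|].
    field_simplify; [|unfold M; lra]. unfold M; nra. }
  assert (HOe : forall e, Rabs e < e0 -> forall t, a < t <= b ->
            inO c d j1 j2 (g t + e * eta t) (g' t + e * eta' t)).
  { intros e He t Ht. destruct (Rlt_or_le t p) as [Htp|Htp]; [|destruct (Rlt_or_le q t) as [Htq|Htq]].
    - destruct (Hz t (or_introl Htp)) as [-> ->]. rewrite !Rmult_0_r, !Rplus_0_r. apply HgO, Ht.
    - destruct (Hz t (or_intror Htq)) as [-> ->]. rewrite !Rmult_0_r, !Rplus_0_r. apply HgO, Ht.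
    - assert (Htt : p <= t <= q) by lra.
      specialize (Hm t Htt). specialize (HM1 t Htt). specialize (HM2 t Htt).
      assert (Hae := Rabs_pos e).
      apply (marg_ok _ _ _ _ _ _ _ _ (HgO t Ht)).
      + replace (g t + e * eta t - g t) with (e * eta t) by ring. rewrite Rabs_mult.
        assert (Rabs e * Rabs (eta t) <= e0 * M).
        { apply Rmult_le_compat; try apply Rabs_pos; lra. }
        lra.
      + replace (g' t + e * eta' t - g' t) with (e * eta' t) by ring. rewrite Rabs_mult.
        assert (Rabs e * Rabs (eta' t) <= e0 * M).
        { apply Rmult_le_compat; try apply Rabs_pos; lra. }
        lra. }
  set (Phi := fun e => RInt (fun t => L (g t + e * eta t) (g' t + e * eta' t)) p q).
  assert (Phi0 : Phi 0 = RInt (fun t => L (g t) (g' t)) p q).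
  { unfold Phi. apply RInt_ext. intros t _. f_equal; ring. }
  assert (Hvar : forall e, Rabs e < e0 ->
     lag_value L a b (fun t => g t + e * eta t) (fun t => g' t + e * eta' t) =
     lag_value L a b g g' + (Phi e - Phi 0) /\
     inX c d j1 j2 L a b alpha beta (fun t => g t + e * eta t) (fun t => g' t + e * eta' t)).
  { intros e He. rewrite Phi0.
    destruct (variation_inX c d j1 j2 L a b alpha beta g g' p q eta eta' e HC Hap Hpq Hqb HX He'c Hed Hz
       (HOe e He)) as [A B]. split; auto. }
  set (D := pdx L (g 0, g' 0)). clear D.
  assert (Hder : is_derive Phi 0
     (RInt (fun t => Derive (fun u => L (g t + u * eta t) (g' t + u * eta' t)) 0) p q)).
  { unfold Phi.
    apply (is_derive_RInt_param (fun u t => L (g t + u * eta t) (g' t + u * eta' t)) p q 0).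
    - apply locR. exists (mkposreal _ he0). simpl. intros y Hy t Ht.
      rewrite Rmin_left in Ht by lra; rewrite Rmax_right in Ht by lra.
      eexists. apply (hder c d j1 j2); [exact HC|]. apply HOe; [|lra]. rewrite Rminus_0_r in Hy. exact Hy.
    - intros t Ht. rewrite Rmin_left in Ht by lra; rewrite Rmax_right in Ht by lra.
      assert (hd : 0 < Rmin e0 (Rmin (p - a) (b - q))) by (repeat apply Rmin_pos; lra).
      apply continuity_2d_pt_ext_loc with
        (fun u v => pdx L (g v + u * eta v, g' v + u * eta' v) * eta v +
                    pdy L (g v + u * eta v, g' v + u * eta' v) * eta' v).
      + exists (mkposreal _ hd). simpl. intros u v Hu Hv.
        assert (A1 := Rmin_l e0 (Rmin (p - a) (b - q))). assert (A2 := Rmin_r e0 (Rmin (p - a) (b - q))).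
        assert (A3 := Rmin_l (p - a) (b - q)). assert (A4 := Rmin_r (p - a) (b - q)).
        rewrite Rminus_0_r in Hu.
        assert (Hv' : a < v < b) by (unfold Rabs in Hv; destruct Rcase_abs in Hv; lra).
        symmetry. apply is_derive_unique. apply (hder c d j1 j2); [exact HC|]. apply HOe; lra.
      + assert (Ht' : a < t < b) by lra.
        assert (HO0 := HOe 0 ltac:(rewrite Rabs_R0; lra) t ltac:(lra)).
        apply continuity_2d_pt_plus; apply continuity_2d_pt_mult.
        * apply (comp2d (pdx L) (fun u v => g v + u * eta v) (fun u v => g' v + u * eta' v)).
          apply (C1_x _ _ _ _ _ HC _ _ HO0).
          apply hcont2; apply continuity_pt_filterlim; [apply Hgc, Ht' | apply Hec].
          apply hcont2; apply continuity_pt_filterlim; [apply Hg'c, Ht' | apply He'c].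
        * apply (continuity_1d_2d_pt_comp eta (fun u v => v)); [apply continuity_pt_filterlim, Hec|apply continuity_2d_pt_id2].
        * apply (comp2d (pdy L) (fun u v => g v + u * eta v) (fun u v => g' v + u * eta' v)).
          apply (C1_y _ _ _ _ _ HC _ _ HO0).
          apply hcont2; apply continuity_pt_filterlim; [apply Hgc, Ht' | apply Hec].
          apply hcont2; apply continuity_pt_filterlim; [apply Hg'c, Ht' | apply He'c].
        * apply (continuity_1d_2d_pt_comp eta' (fun u v => v)); [apply continuity_pt_filterlim, He'c|apply continuity_2d_pt_id2].
    - apply locR. exists (mkposreal _ he0). simpl. intros y Hy.
      rewrite Rminus_0_r in Hy.
      apply (ex_RInt_continuous (V:=R_CompleteNormedModule)). intros t Ht.
      rewrite Rmin_left in Ht by lra; rewrite Rmax_right in Ht by lra.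
      apply (cont_comp2 (fun z => L (fst z) (snd z)) (fun t => g t + y * eta t) (fun t => g' t + y * eta' t)).
      + apply hcont; [apply Hgc; lra | apply Hec].
      + apply hcont; [apply Hg'c; lra | apply He'c].
      + apply (C1_L _ _ _ _ _ HC). apply HOe; lra. }
  assert (HD0 : RInt (fun t => Derive (fun u => L (g t + u * eta t) (g' t + u * eta' t)) 0) p q = 0).
  { apply is_derive_Reals in Hder.
    set (pr := exist (fun l => derivable_pt_lim Phi 0 l) _ Hder : derivable_pt Phi 0).
    change (RInt (fun t => Derive (fun u => L (g t + u * eta t) (g' t + u * eta' t)) 0) p q)
      with (derive_pt Phi 0 pr).
    assert (hneg : - e0 < 0) by lra.
    destruct Hext as [Hmin | Hmax].
    - apply (deriv_minimum Phi (- e0) e0 0 pr hneg he0).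
      intros x H1 H2. assert (Hx : Rabs x < e0) by (unfold Rabs; destruct Rcase_abs; lra).
      destruct (Hvar x Hx) as [E HXx]. specialize (Hmin _ _ HXx). lra.
    - apply (deriv_maximum Phi (- e0) e0 0 pr hneg he0).
      intros x H1 H2. assert (Hx : Rabs x < e0) by (unfold Rabs; destruct Rcase_abs; lra).
      destruct (Hvar x Hx) as [E HXx]. specialize (Hmax _ _ HXx). lra. }
  rewrite <- HD0. apply RInt_ext. intros t Ht.
  rewrite Rmin_left in Ht by lra; rewrite Rmax_right in Ht by lra.
  symmetry. apply is_derive_unique.
  assert (HO0 := HOe 0 ltac:(rewrite Rabs_R0; lra) t ltac:(lra)).
  assert (E := hder c d j1 j2 L g g' eta eta' 0 t HC HO0).
  replace (g t + 0 * eta t) with (g t) in E by ring.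
  replace (g' t + 0 * eta' t) with (g' t) in E by ring. exact E.
Qed.

Lemma exint_cont (k : R -> R) x y : (forall t, Rmin x y <= t <= Rmax x y -> continuous k t) -> ex_RInt k x y.
Proof. intros H. apply (ex_RInt_continuous (V:=R_CompleteNormedModule)). exact H. Qed.

Lemma pos_int (k : R -> R) p q s0 : p < s0 < q ->
  (forall t, p <= t <= q -> continuous k t) -> (forall t, p < t < q -> 0 <= k t) -> 0 < k s0 ->
  0 < RInt k p q.
Proof.
  intros Hs Hc Hpos Hk0.
  assert (hk : 0 < k s0 / 2) by lra.
  destruct (proj1 (contR k s0) (Hc s0 ltac:(lra)) (mkposreal _ hk)) as [dl Hd]. simpl in Hd.
  assert (hd : 0 < Rmin (dl / 2) (Rmin ((s0 - p) / 2) ((q - s0) / 2))).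
  { destruct dl; simpl. repeat apply Rmin_pos; lra. }
  set (r := Rmin (dl / 2) (Rmin ((s0 - p) / 2) ((q - s0) / 2))) in *.
  assert (A1 := Rmin_l (dl / 2) (Rmin ((s0 - p) / 2) ((q - s0) / 2))).
  assert (A2 := Rmin_r (dl / 2) (Rmin ((s0 - p) / 2) ((q - s0) / 2))).
  assert (A3 := Rmin_l ((s0 - p) / 2) ((q - s0) / 2)).
  assert (A4 := Rmin_r ((s0 - p) / 2) ((q - s0) / 2)).
  fold r in A1, A2.
  assert (hdl := cond_pos dl).
  assert (E1 : ex_RInt k p (s0 - r)).
  { apply exint_cont. intros t Ht. rewrite Rmin_left in Ht by lra; rewrite Rmax_right in Ht by lra. apply Hc; lra. }
  assert (E2 : ex_RInt k (s0 - r) (s0 + r)).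
  { apply exint_cont. intros t Ht. rewrite Rmin_left in Ht by lra; rewrite Rmax_right in Ht by lra. apply Hc; lra. }
  assert (E3 : ex_RInt k (s0 + r) q).
  { apply exint_cont. intros t Ht. rewrite Rmin_left in Ht by lra; rewrite Rmax_right in Ht by lra. apply Hc; lra. }
  assert (I1 : 0 <= RInt k p (s0 - r)).
  { apply RInt_ge_0; auto; try lra. intros t Ht; apply Hpos; lra. }
  assert (I3 : 0 <= RInt k (s0 + r) q).
  { apply RInt_ge_0; auto; try lra. intros t Ht; apply Hpos; lra. }
  assert (I2 : 0 < RInt k (s0 - r) (s0 + r)).
  { apply RInt_gt_0; try lra.
    - intros t Ht. assert (Rabs (t - s0) < dl) by (unfold Rabs; destruct Rcase_abs; lra).
      specialize (Hd t H). unfold Rabs in Hd; destruct Rcase_abs in Hd; lra.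
    - intros t Ht. apply Hc; lra. }
  assert (C1 := RInt_Chasles (V:=R_CompleteNormedModule) k p (s0 - r) (s0 + r) E1 E2).
  assert (C2 := RInt_Chasles (V:=R_CompleteNormedModule) k p (s0 + r) q
     (ex_RInt_Chasles (V:=R_CompleteNormedModule) k _ _ _ E1 E2) E3).
  unfold plus in C1, C2; simpl in C1, C2.
  rewrite <- C2, <- C1. lra.
Qed.

Definition clampf (p q s : R) : R := (p + q + Rabs (s - p) - Rabs (s - q)) / 2.
Definition phip (p q s : R) : R := ((s - p) * (q - s) + Rabs ((s - p) * (q - s))) / 2.

Lemma clamp_in p q s : p <= q -> p <= clampf p q s <= q.
Proof. intros H. unfold clampf. unfold Rabs; repeat destruct Rcase_abs; lra. Qed.
Lemma clamp_id p q s : p <= s <= q -> clampf p q s = s.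
Proof. intros H. unfold clampf. unfold Rabs; repeat destruct Rcase_abs; lra. Qed.
Lemma phip_out p q s : p <= q -> s < p \/ q < s -> phip p q s = 0.
Proof.
  intros H Hs. unfold phip. assert ((s - p) * (q - s) <= 0) by (destruct Hs; nra).
  rewrite Rabs_left1 by lra. lra.
Qed.
Lemma phip_in p q s : p <= s <= q -> phip p q s = (s - p) * (q - s).
Proof.
  intros Hs. unfold phip. assert (0 <= (s - p) * (q - s)) by nra.
  rewrite Rabs_pos_eq by lra. lra.
Qed.
Lemma clamp_cont p q s : continuous (clampf p q) s.
Proof.
  unfold clampf. apply (continuous_mult (fun s => p + q + Rabs (s - p) - Rabs (s - q)) (fun _ => / 2)); [|apply continuous_const].
  apply (continuous_minus (fun s => p + q + Rabs (s - p)) (fun s => Rabs (s - q))).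
  apply (continuous_plus (fun _ => p + q) (fun s => Rabs (s - p))). apply continuous_const.
  apply continuous_Rabs_comp. apply (continuous_minus (fun s => s) (fun _ => p)); [apply continuous_id|apply continuous_const].
  apply continuous_Rabs_comp. apply (continuous_minus (fun s => s) (fun _ => q)); [apply continuous_id|apply continuous_const].
Qed.
Lemma phip_cont p q s : continuous (phip p q) s.
Proof.
  assert (Hc : continuous (fun s => (s - p) * (q - s)) s).
  { apply (continuous_mult (fun s => s - p) (fun s => q - s)).
    apply (continuous_minus (fun s => s) (fun _ => p)); [apply continuous_id|apply continuous_const].
    apply (continuous_minus (fun _ => q) (fun s => s)); [apply continuous_const|apply continuous_id]. }
  unfold phip. apply (continuous_mult (fun s => (s - p) * (q - s) + Rabs ((s - p) * (q - s))) (fun _ => / 2)); [|apply continuous_const].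
  apply (continuous_plus (fun s => (s - p) * (q - s)) (fun s => Rabs ((s - p) * (q - s)))). exact Hc.
  apply continuous_Rabs_comp. exact Hc.
Qed.

Lemma RInt_minusR (f k : R -> R) x y : ex_RInt f x y -> ex_RInt k x y ->
  @eq R (RInt (fun s => f s - k s) x y) (RInt f x y - RInt k x y).
Proof. intros H1 H2. exact (RInt_minus (V:=R_CompleteNormedModule) f k x y H1 H2). Qed.
Lemma RInt_scalR (f : R -> R) x y l : ex_RInt f x y ->
  @eq R (RInt (fun s => l * f s) x y) (l * RInt f x y).
Proof. intros H1. exact (RInt_scal (V:=R_CompleteNormedModule) f x y l H1). Qed.

Ltac rring := match goal with |- ?x = ?y => change (@eq R x y) end; ring.

Lemma ex_RInt_scalR (f : R -> R) l x y : ex_RInt f x y -> ex_RInt (fun s => l * f s) x y.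
Proof. intros H. exact (ex_RInt_scal (V:=R_NormedModule) f x y l H). Qed.

Lemma Lx_cont c d j1 j2 L a b alpha beta g g' :
  C1_on (inO c d j1 j2) L -> inX c d j1 j2 L a b alpha beta g g' ->
  forall t, a < t < b -> continuous (fun s => pdx L (g s, g' s)) t.
Proof.
  intros HC HX t Ht. apply cont_comp2.
  apply (gcont _ _ _ _ _ _ _ _ _ _ _ HX); lra. apply (g'cont _ _ _ _ _ _ _ _ _ _ _ HX); lra.
  apply (C1_x _ _ _ _ _ HC). apply (gO _ _ _ _ _ _ _ _ _ _ _ HX); lra.
Qed.
Lemma Ly_cont c d j1 j2 L a b alpha beta g g' :
  C1_on (inO c d j1 j2) L -> inX c d j1 j2 L a b alpha beta g g' ->
  forall t, a < t < b -> continuous (fun s => pdy L (g s, g' s)) t.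
Proof.
  intros HC HX t Ht. apply cont_comp2.
  apply (gcont _ _ _ _ _ _ _ _ _ _ _ HX); lra. apply (g'cont _ _ _ _ _ _ _ _ _ _ _ HX); lra.
  apply (C1_y _ _ _ _ _ HC). apply (gO _ _ _ _ _ _ _ _ _ _ _ HX); lra.
Qed.

Lemma prim_der (k : R -> R) a b p s : a < p < b -> a < s < b ->
  (forall t, a < t < b -> continuous k t) -> is_derive (fun x => RInt k p x) s (k s).
Proof.
  intros Hp Hs Hk. apply (is_derive_RInt k (fun x => RInt k p x) p s).
  - apply locR. assert (h : 0 < Rmin (s - a) (b - s)) by (apply Rmin_pos; lra).
    exists (mkposreal _ h). simpl. intros y Hy.
    assert (A1 := Rmin_l (s - a) (b - s)). assert (A2 := Rmin_r (s - a) (b - s)).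
    assert (Hy' : a < y < b) by (unfold Rabs in Hy; destruct Rcase_abs in Hy; lra).
    apply (RInt_correct (V:=R_CompleteNormedModule)). apply exint_cont. intros t Ht.
    apply Hk. unfold Rmin, Rmax in Ht; destruct Rle_dec in Ht; lra.
  - apply Hk, Hs.
Qed.

Lemma local_EL c d j1 j2 L a b alpha beta g g' p q :
  C1_on (inO c d j1 j2) L -> a < p -> p < q -> q < b ->
  inX c d j1 j2 L a b alpha beta g g' ->
  extremum c d j1 j2 L a b alpha beta g g' ->
  exists C, forall s, p < s < q ->
    pdy L (g s, g' s) = RInt (fun t => pdx L (g t, g' t)) p s + C.
Proof.
  intros HC Hap Hpq Hqb HX Hext.
  set (Lx := fun t => pdx L (g t, g' t)).
  set (Ly := fun t => pdy L (g t, g' t)).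
  assert (HLx : forall t, a < t < b -> continuous Lx t) by exact (Lx_cont _ _ _ _ _ _ _ _ _ _ _ HC HX).
  assert (HLy : forall t, a < t < b -> continuous Ly t) by exact (Ly_cont _ _ _ _ _ _ _ _ _ _ _ HC HX).
  set (A := fun s => RInt Lx p s).
  assert (HA : forall s, a < s < b -> is_derive A s (Lx s)).
  { intros s Hs. apply (prim_der Lx a b p s); auto; lra. }
  assert (HAc : forall s, a < s < b -> continuous A s) by (intros s Hs; eapply der_cont, HA, Hs).
  set (F := fun s => Ly s - A s).
  assert (HF : forall s, a < s < b -> continuous F s).
  { intros s Hs. apply (continuous_minus Ly A); auto. }
  set (phi := phip p q).
  assert (Hphi_pos : 0 < RInt phi p q).
  { apply RInt_gt_0; auto. intros t Ht. unfold phi; rewrite phip_in by lra. nra.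
    intros t _; apply phip_cont. }
  set (cc := RInt (fun s => F s * phi s) p q / RInt phi p q).
  set (eta' := fun s => (F (clampf p q s) - cc) * phi s).
  assert (He'c : forall t, continuous eta' t).
  { intros t. unfold eta'. apply (continuous_mult (fun s => F (clampf p q s) - cc) phi); [|apply phip_cont].
    apply (continuous_minus (fun s => F (clampf p q s)) (fun _ => cc)); [|apply continuous_const].
    apply (continuous_comp (clampf p q) F). apply clamp_cont.
    apply HF. assert (H := clamp_in p q t ltac:(lra)). lra. }
  assert (He'ex : forall x y, ex_RInt eta' x y) by (intros x y; apply exint_cont; intros; apply He'c).
  assert (He'in : forall s, p <= s <= q -> eta' s = (F s - cc) * ((s - p) * (q - s))).
  { intros s Hs. unfold eta', phi. rewrite clamp_id, phip_in by lra. reflexivity. }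
  assert (He'out : forall s, s < p \/ q < s -> eta' s = 0).
  { intros s Hs. unfold eta', phi. rewrite phip_out by lra. ring. }
  assert (Hcont_pq : forall (k : R -> R), (forall t, a < t < b -> continuous k t) -> ex_RInt k p q).
  { intros k Hk. apply exint_cont. intros t Ht. apply Hk.
    rewrite Rmin_left in Ht by lra; rewrite Rmax_right in Ht by lra. lra. }
  assert (HFphi : ex_RInt (fun s => F s * phi s) p q).
  { apply Hcont_pq. intros t Ht. apply (continuous_mult F phi); auto. apply phip_cont. }
  assert (Hphiex : ex_RInt phi p q) by (apply Hcont_pq; intros; apply phip_cont).
  assert (Int0 : @eq R (RInt eta' p q) 0).
  { rewrite (RInt_ext eta' (fun s => F s * phi s - cc * phi s)).
    - rewrite RInt_minusR; auto. 2: { apply ex_RInt_scalR, Hphiex. }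
      rewrite RInt_scalR by auto. unfold cc. field. apply Rgt_not_eq. exact Hphi_pos.
    - intros s Hs. rewrite Rmin_left in Hs by lra; rewrite Rmax_right in Hs by lra.
      unfold eta'. rewrite clamp_id by lra. rring. }
  set (eta := fun s => RInt eta' p s).
  assert (Hed : forall t, is_derive eta t (eta' t)).
  { intros t. apply (is_derive_RInt eta' eta p t); [|apply He'c].
    apply filter_forall. intros y. apply (RInt_correct (V:=R_CompleteNormedModule)). apply He'ex. }
  assert (Hz : forall t, t < p \/ q < t -> eta t = 0 /\ eta' t = 0).
  { intros t Ht. split; [|apply He'out, Ht]. unfold eta. destruct Ht as [Ht|Ht].
    - apply is_RInt_unique. apply is_RInt_zero_ext. intros s Hs. apply He'out.
      left. rewrite Rmax_left in Hs by lra. lra.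
    - rewrite <- (RInt_Chasles (V:=R_CompleteNormedModule) eta' p q t) by apply He'ex.
      rewrite Int0. rewrite (is_RInt_unique eta' q t 0). unfold plus; simpl; ring.
      apply is_RInt_zero_ext. intros s Hs. apply He'out. right. rewrite Rmin_left in Hs by lra. lra. }
  assert (Hvar := variation c d j1 j2 L a b alpha beta g g' p q eta eta' HC Hap Hpq Hqb HX Hext He'c Hed Hz).
  assert (Hvar' : @eq R (RInt (fun s => Lx s * eta s + Ly s * eta' s) p q) 0) by exact Hvar.
  assert (Hec : forall t, continuous eta t) by (intros t; eapply der_cont, Hed).
  assert (IBP : @eq R (RInt (fun s => Lx s * eta s + A s * eta' s) p q) 0).
  { apply is_RInt_unique.
    assert (H := is_RInt_derive (V:=R_CompleteNormedModule) (fun s => A s * eta s)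
                  (fun s => Lx s * eta s + A s * eta' s) p q).
    replace 0 with (minus (A q * eta q) (A p * eta p)).
    apply H.
    - intros x Hx. rewrite Rmin_left in Hx by lra; rewrite Rmax_right in Hx by lra.
      apply (is_derive_mult A eta). apply HA; lra. apply Hed. intros; apply Rmult_comm.
    - intros x Hx. rewrite Rmin_left in Hx by lra; rewrite Rmax_right in Hx by lra.
      apply (continuous_plus (fun s => Lx s * eta s) (fun s => A s * eta' s)).
      apply (continuous_mult Lx eta). apply HLx; lra. apply Hec.
      apply (continuous_mult A eta'). apply HAc; lra. apply He'c.
    - assert (E1 : eta q = 0) by (unfold eta; exact Int0).
      assert (E2 : eta p = 0) by (unfold eta; apply (RInt_point (V:=R_CompleteNormedModule))).
      rewrite E1, E2. unfold minus, plus, opp; simpl. ring. }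
  assert (Hex1 : ex_RInt (fun s => Lx s * eta s + Ly s * eta' s) p q).
  { apply Hcont_pq. intros t Ht.
    apply (continuous_plus (fun s => Lx s * eta s) (fun s => Ly s * eta' s)).
    apply (continuous_mult Lx eta). apply HLx; lra. apply Hec.
    apply (continuous_mult Ly eta'). apply HLy; lra. apply He'c. }
  assert (Hex2 : ex_RInt (fun s => Lx s * eta s + A s * eta' s) p q).
  { apply Hcont_pq. intros t Ht.
    apply (continuous_plus (fun s => Lx s * eta s) (fun s => A s * eta' s)).
    apply (continuous_mult Lx eta). apply HLx; lra. apply Hec.
    apply (continuous_mult A eta'). apply HAc; lra. apply He'c. }
  assert (HFe : @eq R (RInt (fun s => F s * eta' s) p q) 0).
  { rewrite (RInt_ext (fun s => F s * eta' s)
        (fun s => (Lx s * eta s + Ly s * eta' s) - (Lx s * eta s + A s * eta' s))).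
    rewrite RInt_minusR by auto. rewrite Hvar', IBP. ring.
    intros; unfold F; rring. }
  assert (Hsq : @eq R (RInt (fun s => (F s - cc) ^ 2 * phi s) p q) 0).
  { rewrite (RInt_ext (fun s => (F s - cc) ^ 2 * phi s) (fun s => F s * eta' s - cc * eta' s)).
    rewrite RInt_minusR. rewrite RInt_scalR. rewrite HFe, Int0. ring.
    apply He'ex.
    apply Hcont_pq. intros t Ht. apply (continuous_mult F eta'). apply HF; lra. apply He'c.
    apply ex_RInt_scalR, He'ex.
    intros s Hs. rewrite Rmin_left in Hs by lra; rewrite Rmax_right in Hs by lra.
    unfold eta'. rewrite clamp_id by lra. rring. }
  exists cc. intros s Hs.
  destruct (Req_dec (F s) cc) as [E|E].
  - change (Ly s = A s + cc). unfold F in E. lra.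
  - exfalso.
    assert (P : 0 < RInt (fun s => (F s - cc) ^ 2 * phi s) p q).
    { apply (pos_int _ p q s Hs).
      - intros t Ht. apply (continuous_mult (fun s => (F s - cc) ^ 2) phi); [|apply phip_cont].
        apply (continuous_mult (fun s => F s - cc) (fun s => (F s - cc) ^ 1)).
        apply (continuous_minus F (fun _ => cc)). apply HF; lra. apply continuous_const.
        apply (continuous_mult (fun s => F s - cc) (fun _ => 1)).
        apply (continuous_minus F (fun _ => cc)). apply HF; lra. apply continuous_const. apply continuous_const.
      - intros t Ht. unfold phi; rewrite phip_in by lra. apply Rmult_le_pos. apply pow2_ge_0. nra.
      - unfold phi; rewrite phip_in by lra. apply Rmult_lt_0_compat.
        rewrite <- Rsqr_pow2; apply Rsqr_pos_lt; lra. nra. }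
    lra.
Qed.

Lemma atl (f : R -> R) b l : filterlim f (at_left b) (locally l) <->
  forall eps : posreal, exists d : posreal, forall s, Rabs (s - b) < d -> s < b -> Rabs (f s - l) < eps.
Proof.
  split.
  - intros H eps. assert (H1 := proj1 (filterlim_locally f l) H eps).
    apply locR in H1. destruct H1 as [d Hd]. exists d. intros s Hs Hsb. apply ballR. apply Hd; auto.
  - intros H. apply filterlim_locally. intros eps. apply locR. destruct (H eps) as [d Hd].
    exists d. intros s Hs Hsb. apply ballR. apply Hd; auto.
Qed.

Lemma lc_comp (F : R * R -> R) (g g' : R -> R) b :
  filterlim g (at_left b) (locally (g b)) -> filterlim g' (at_left b) (locally (g' b)) ->
  continuous F (g b, g' b) -> filterlim (fun s => F (g s, g' s)) (at_left b) (locally (F (g b, g' b))).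
Proof.
  intros H1 H2 HF. apply atl. intros eps.
  destruct (cont2R F _ _ HF eps) as [d Hd].
  destruct (proj1 (atl g b _) H1 d) as [d1 Hd1].
  destruct (proj1 (atl g' b _) H2 d) as [d2 Hd2].
  assert (h : 0 < Rmin d1 d2) by (apply Rmin_pos; apply cond_pos).
  exists (mkposreal _ h). simpl. intros s Hs Hsb.
  assert (A1 := Rmin_l d1 d2). assert (A2 := Rmin_r d1 d2).
  apply Hd; [apply Hd1|apply Hd2]; auto; lra.
Qed.

Lemma g_left c d j1 j2 L a b alpha beta g g' : a < b -> inX c d j1 j2 L a b alpha beta g g' ->
  filterlim g (at_left b) (locally (g b)).
Proof.
  intros Hab [Hg _]. specialize (Hg b ltac:(lra)).
  apply atl. intros eps.
  assert (H1 := proj1 (filterlim_locally g (g b)) Hg eps).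
  unfold within in H1. apply locR in H1. destruct H1 as [dd Hd].
  assert (h : 0 < Rmin dd (b - a)) by (apply Rmin_pos; [apply cond_pos|lra]).
  exists (mkposreal _ h). simpl. intros s Hs Hsb.
  assert (A1 := Rmin_l dd (b - a)). assert (A2 := Rmin_r dd (b - a)).
  assert (Hs2 : b - Rmin dd (b - a) < s) by (unfold Rabs in Hs; destruct Rcase_abs in Hs; lra).
  apply ballR. apply Hd; [apply ballR|]; lra.
Qed.

Lemma lim_le (H : R -> R) s b K : s < b -> (forall r, s < r < b -> Rabs (H r) <= K) ->
  filterlim H (at_left b) (locally (H b)) -> Rabs (H b) <= K.
Proof.
  intros Hsb HK Hl. destruct (Rle_lt_dec (Rabs (H b)) K) as [E|E]; auto.
  exfalso. assert (hg : 0 < Rabs (H b) - K) by lra.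
  destruct (proj1 (atl H b _) Hl (mkposreal _ hg)) as [d Hd]. simpl in Hd.
  assert (hd := cond_pos d).
  set (r := b - Rmin d (b - s) / 2).
  assert (A1 := Rmin_l d (b - s)). assert (A2 := Rmin_r d (b - s)).
  assert (A3 : 0 < Rmin d (b - s)) by (apply Rmin_pos; lra).
  assert (Hr : s < r < b) by (unfold r; lra).
  assert (Hrb : Rabs (r - b) < d) by (unfold r; rewrite Rabs_left by lra; lra).
  specialize (Hd r Hrb ltac:(lra)). specialize (HK r Hr).
  assert (T := Rabs_triang_inv (H b) (H r)).
  rewrite Rabs_minus_sym in Hd. lra.
Qed.

Lemma endpoint (Ly Lx : R -> R) a b : a < b ->
  (forall t, a < t < b -> is_derive Ly t (Lx t)) ->
  filterlim Lx (at_left b) (locally (Lx b)) -> filterlim Ly (at_left b) (locally (Ly b)) ->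
  filterlim (fun s => (Ly s - Ly b) / (s - b)) (at_left b) (locally (Lx b)).
Proof.
  intros Hab Hd HLx HLy. apply atl. intros eps.
  assert (he : 0 < eps / 2) by (destruct eps; simpl; lra).
  destruct (proj1 (atl Lx b _) HLx (mkposreal _ he)) as [d1 Hd1]. simpl in Hd1.
  assert (h : 0 < Rmin d1 (b - a)) by (apply Rmin_pos; [apply cond_pos|lra]).
  exists (mkposreal _ h). simpl. intros s Hs Hsb.
  assert (A1 := Rmin_l d1 (b - a)). assert (A2 := Rmin_r d1 (b - a)).
  assert (Hs' : b - Rmin d1 (b - a) < s) by (unfold Rabs in Hs; destruct Rcase_abs in Hs; lra).
  set (H := fun r => Ly r + (-1) * (Ly s + Lx b * (r - s))).
  assert (HK : forall r, s < r < b -> Rabs (H r) <= eps / 2 * (b - s)).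
  { intros r Hr. unfold H.
    replace (Ly r + -1 * (Ly s + Lx b * (r - s))) with (Ly r - Ly s - Lx b * (r - s)) by ring.
    eapply Rle_trans; [apply (mvt_bound Ly s r (Lx b) (eps / 2))|].
    - intros w Hw. rewrite Rmin_left in Hw by lra; rewrite Rmax_right in Hw by lra.
      eexists; apply Hd; lra.
    - intros w Hw. rewrite Rmin_left in Hw by lra; rewrite Rmax_right in Hw by lra.
      rewrite (is_derive_unique Ly w (Lx w)) by (apply Hd; lra).
      apply Rlt_le. apply Hd1. rewrite Rabs_left by lra. lra. lra.
    - rewrite Rabs_pos_eq by lra. apply Rmult_le_compat_l; lra. }
  assert (Hlim : filterlim H (at_left b) (locally (H b))).
  { unfold H. apply (flim_pe _ Ly (fun r => Ly s + Lx b * (r - s))); [exact HLy|].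
    apply (flim_pe _ (fun _ => Ly s) (fun r => r - s)); [apply filterlim_const|].
    apply (filterlim_filter_le_1 (F := locally b) _ (filter_le_within (F:=locally b) _)).
    apply (continuous_minus (fun r => r) (fun _ => s)); [apply continuous_id|apply continuous_const]. }
  assert (HB := lim_le H s b _ Hsb HK Hlim).
  unfold H in HB.
  replace ((Ly s - Ly b) / (s - b) - Lx b) with
     ((Ly b + -1 * (Ly s + Lx b * (b - s))) * / (b - s)) by (field; lra).
  rewrite Rabs_mult, Rabs_inv, (Rabs_pos_eq (b - s)) by lra.
  apply (Rle_lt_trans _ (eps / 2)); [|lra].
  apply (Rmult_le_reg_r (b - s)); [lra|].
  rewrite Rmult_assoc, Rinv_l, Rmult_1_r by lra. lra.
Qed.

Theorem theorem2 (c : R) (d j1 j2 : Rbar) (L : R -> R -> R)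
  (a b alpha beta : R) (g g' : R -> R) :
  C1_on (inO c d j1 j2) L ->
  a < b ->
  inX c d j1 j2 L a b alpha beta g g' ->
  ((forall h h', inX c d j1 j2 L a b alpha beta h h' ->
      lag_value L a b g g' <= lag_value L a b h h') \/
   (forall h h', inX c d j1 j2 L a b alpha beta h h' ->
      lag_value L a b h h' <= lag_value L a b g g')) ->
  deriv_on_aB (fun t => pdy L (g t, g' t)) (fun t => pdx L (g t, g' t)) a b.
Proof.
  intros HC Hab HX Hext.
  assert (Hint : forall t, a < t < b -> is_derive (fun t => pdy L (g t, g' t)) t (pdx L (g t, g' t))).
  { intros t Ht.
    destruct (local_EL c d j1 j2 L a b alpha beta g g' ((a + t) / 2) ((t + b) / 2) HC
       ltac:(lra) ltac:(lra) ltac:(lra) HX Hext) as [C HC'].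
    assert (Hd : is_derive (fun s => RInt (fun t => pdx L (g t, g' t)) ((a + t) / 2) s + C) t
                   (pdx L (g t, g' t) + 0)).
    { apply (is_derive_plus (fun s => RInt (fun t => pdx L (g t, g' t)) ((a + t) / 2) s) (fun _ => C)).
      apply (prim_der (fun t => pdx L (g t, g' t)) a b); [lra|lra|].
      apply (Lx_cont _ _ _ _ _ _ _ _ _ _ _ HC HX).
      exact (is_derive_const (K:=R_AbsRing) (V:=R_NormedModule) C t). }
    rewrite Rplus_0_r in Hd.
    eapply is_derive_ext_loc; [|exact Hd].
    apply locR. assert (h : 0 < Rmin ((t - a) / 2) ((b - t) / 2)) by (apply Rmin_pos; lra).
    exists (mkposreal _ h). simpl. intros y Hy.
    assert (A1 := Rmin_l ((t - a) / 2) ((b - t) / 2)). assert (A2 := Rmin_r ((t - a) / 2) ((b - t) / 2)).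
    symmetry. apply HC'. unfold Rabs in Hy; destruct Rcase_abs in Hy; lra. }
  split; [exact Hint|].
  assert (HOb := gO _ _ _ _ _ _ _ _ _ _ _ HX b ltac:(lra)).
  assert (Hgl := g_left _ _ _ _ _ _ _ _ _ _ _ Hab HX).
  destruct HX as [_ [_ [[_ Hg'b] _]]].
  apply (endpoint (fun t => pdy L (g t, g' t)) (fun t => pdx L (g t, g' t)) a b); auto.
  - apply (lc_comp (pdx L) g g' b Hgl Hg'b). apply (C1_x _ _ _ _ _ HC _ _ HOb).
  - apply (lc_comp (pdy L) g g' b Hgl Hg'b). apply (C1_y _ _ _ _ _ HC _ _ HOb).
Qed.
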